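(* Let $R$ be a ring and $R\le S=R[s_1,\dots,s_k]$ a ring extension generated as an $R$-algebra by elements $s_1,\dots,s_k\in S$ that commute with each other and satisfy $s_iR\subseteq Rs_i$ for all $i$. If $M$ is an $S$-module that is finitely presented as an $R$-module, then $M$ is finitely presented as an $S$-module. *)

(* Defs.v *)
From HB Require Import structures.
From mathcomp Require Import all_boot all_order all_algebra.
Set Implicit Arguments. Unset Strict Implicit. Unset Printing Implicit Defensive.
Import GRing.Theory.
Local Open Scope ring_scope.

Definition fin_presented (A : pzRingType) (M : zmodType) (act : A -> M -> M)
  : Prop :=
  exists (n : nat) (g : 'I_n -> M),
    (forall x : M, exists a : 'I_n -> A, x = \sum_(i < n) act (a i) (g i)) /\
    exists (p : nat) (rel : 'I_p -> 'I_n -> A),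
      (forall j : 'I_p, \sum_(i < n) act (rel j i) (g i) = 0) /\
      (forall a : 'I_n -> A, \sum_(i < n) act (a i) (g i) = 0 ->
         exists c : 'I_p -> A,
           forall i : 'I_n, a i = \sum_(j < p) c j * rel j i).

(* S = R[s_1, ..., s_k]: S is generated as a ring by the image of R
   (under the embedding phi) together with s_1, ..., s_k, i.e. every
   subring of S containing phi(R) and the s_i is all of S. *)
Definition ring_generated (R S : pzRingType) (phi : R -> S) (k : nat)
  (s : 'I_k -> S) : Prop :=
  forall P : S -> Prop,
    P 1 ->
    (forall x y, P x -> P y -> P (x - y)) ->
    (forall x y, P x -> P y -> P (x * y)) ->
    (forall r, P (phi r)) ->
    (forall i, P (s i)) ->
    forall x, P x.

(* Main.v *)
Require Import Defs.
From Stdlib Require Import ClassicalEpsilon.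
From HB Require Import structures.
From mathcomp Require Import all_boot all_order all_algebra.
Import GRing.Theory.
Local Open Scope ring_scope.

Lemma fchoice_aux (A B : Type) (P : A -> B -> Prop) :
  (forall x, exists y, P x y) -> exists f : A -> B, forall x, P x (f x).
Proof.
move=> H; exists (fun x => proj1_sig (constructive_indefinite_description _ (H x))).
by move=> x; exact: proj2_sig _.
Qed.
Arguments fchoice_aux {A B P}.

Lemma sub4 (S : zmodType) (a b c d : S) : a - b - (c - d) = (a - c) - (b - d).
Proof. by rewrite !opprB addrACA [in RHS]addrACA [- c + _]addrC. Qed.

Theorem mainTheorem11 (R S : pzRingType) (phi : {rmorphism R -> S})
  (phi_inj : injective phi) (k : nat) (s : 'I_k -> S)
  (Hgen : ring_generated phi s)
  (Hcomm : forall i j : 'I_k, s i * s j = s j * s i)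
  (Hnorm : forall (i : 'I_k) (r : R), exists r' : R, s i * phi r = phi r' * s i)
  (M : lmodType S)
  (HfpR : fin_presented (fun (r : R) (m : M) => phi r *: m)) :
  fin_presented (fun (a : S) (m : M) => a *: m).
Proof.
case: HfpR => n [g [Hgen_g [p [rel [Hrel0 Hrelker]]]]].
have [a Ha] : exists a : 'I_k * 'I_n -> 'I_n -> R, forall li,
    s li.1 *: g li.2 = \sum_(m < n) phi (a li m) *: g m.
  apply: (@fchoice_aux ('I_k * 'I_n)%type ('I_n -> R) (fun li b => s li.1 *: g li.2 = \sum_(m < n) phi (b m) *: g m)).
  by move=> li; exact: Hgen_g.
pose T : finType := ('I_p + 'I_k * 'I_n)%type.
pose relS (t : T) (i : 'I_n) : S := match t with
  | inl j => phi (rel j i)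
  | inr li => (if li.2 == i then s li.1 else 0) - phi (a li i) end.
pose inN (v : 'I_n -> S) := exists c : T -> S, forall i, v i = \sum_t c t * relS t i.
have inN_rel : forall t, inN (relS t).
  move=> t; exists (fun t' => if t' == t then 1 else 0) => i.
  rewrite (bigD1 t) //= eqxx mul1r big1 ?addr0 // => t' /negbTE ->; by rewrite mul0r.
have inN_scale : forall x v, inN v -> inN (fun i => x * v i).
  move=> x v [c Hc]; exists (fun t => x * c t) => i.
  by rewrite Hc mulr_sumr; apply: eq_bigr => t _; rewrite mulrA.
have inN_sub : forall v w, inN v -> inN w -> inN (fun i => v i - w i).
  move=> v w [c Hc] [d Hd]; exists (fun t => c t - d t) => i.
  by rewrite Hc Hd -sumrB; apply: eq_bigr => t _; rewrite mulrBl.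
have inN_add : forall v w, inN v -> inN w -> inN (fun i => v i + w i).
  move=> v w [c Hc] [d Hd]; exists (fun t => c t + d t) => i.
  by rewrite Hc Hd -big_split; apply: eq_bigr => t _; rewrite mulrDl.
have inN_ext : forall v w, (forall i, v i = w i) -> inN w -> inN v.
  by move=> v w E [c Hc]; exists c => i; rewrite E.
have inN_zero : inN (fun _ => 0).
  by exists (fun _ => 0) => i; rewrite big1 // => t _; rewrite mul0r.
have inN_sum : forall (F : 'I_n -> 'I_n -> S), (forall m, inN (F m)) ->
    inN (fun i => \sum_m F m i).
  move=> F H.
  have [c Hc] : exists c : 'I_n -> T -> S, forall m i,
      F m i = \sum_t c m t * relS t i := fchoice_aux H.
  exists (fun t => \sum_m c m t) => i.
  rewrite (eq_bigr _ (fun m _ => Hc m i)) exchange_big.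
  by apply: eq_bigr => t _; rewrite mulr_suml.
pose e (i0 : 'I_n) (y : S) (i : 'I_n) := if i0 == i then y else 0.
have red : forall x : S, forall r i0, exists b : 'I_n -> R,
    inN (fun i => e i0 (x * phi r) i - phi (b i)).
  apply: (Hgen (fun x => forall r i0, exists b : 'I_n -> R,
    inN (fun i => e i0 (x * phi r) i - phi (b i)))).
  - move=> r i0; exists (fun i => if i0 == i then r else 0).
    apply: inN_ext inN_zero => i; rewrite /e.
    by case: (i0 == i); rewrite ?mul1r ?rmorph0 subrr.
  - move=> x y Hx Hy r i0; have [bx Hbx] := Hx r i0; have [by' Hby] := Hy r i0.
    exists (fun i => bx i - by' i).
    apply: inN_ext (inN_sub _ _ Hbx Hby) => i /=.
    rewrite /e rmorphB; case: (i0 == i); rewrite ?mulrBl; first exact: sub4.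
    by rewrite -[0 in LHS](subr0 0) sub4.
  - move=> x y Hx Hy r i0; have [b Hb] := Hy r i0.
    have [b' Hb'] : exists b' : 'I_n -> 'I_n -> R, forall m,
        inN (fun i => e m (x * phi (b m)) i - phi (b' m i)) :=
      fchoice_aux (fun m => Hx (b m) m).
    exists (fun i => \sum_m b' m i).
    apply: inN_ext (inN_add _ _ (inN_scale x _ Hb) (inN_sum _ Hb')) => i /=.
    rewrite rmorph_sum sumrB /e -big_mkcond big_pred1_eq mulrBr.
    by case: (i0 == i); rewrite ?mulrA ?mulr0 addrA subrK.
  - move=> r' r i0; exists (fun i => if i0 == i then r' * r else 0).
    apply: inN_ext inN_zero => i; rewrite /e.
    by case: (i0 == i); rewrite ?rmorphM ?rmorph0 subrr.
  - move=> l r i0; have [r' Hr'] := Hnorm l r.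
    exists (fun i => r' * a (l, i0) i).
    apply: inN_ext (inN_scale (phi r') _ (inN_rel (inr (l, i0)))) => i /=.
    rewrite /e Hr' rmorphM mulrBr; by case: (i0 == i); rewrite ?mulr0.
have relS0 : forall t, \sum_i relS t i *: g i = 0.
  case=> [j | [l i0]] /=; first exact: Hrel0.
  under eq_bigr do rewrite scalerBl.
  rewrite sumrB (bigD1 i0) //= eqxx big1 ?addr0.
    by rewrite (Ha (l, i0)) subrr.
  by move=> i /negbTE; rewrite eq_sym => ->; rewrite scale0r.
have inN0map : forall v, inN v -> \sum_i v i *: g i = 0.
  move=> v [c Hc]; under eq_bigr do rewrite Hc scaler_suml.
  rewrite exchange_big big1 // => t _.
  under eq_bigr do rewrite -scalerA.
  by rewrite -scaler_sumr relS0 scaler0.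
exists n, g; split.
  by move=> x; have [c Hc] := Hgen_g x; exists (fun i => phi (c i)).
exists #|T|, (fun j i => relS (enum_val j) i); split.
  by move=> j; exact: relS0.
move=> v Hv.
have [b Hb] : exists b : 'I_n -> 'I_n -> R, forall i0,
    inN (fun i => e i0 (v i0 * phi 1) i - phi (b i0 i)) :=
  fchoice_aux (fun i0 => red (v i0) 1 i0).
pose B i := \sum_i0 b i0 i.
have HvB : inN (fun i => v i - phi (B i)).
  apply: inN_ext (inN_sum _ Hb) => i /=.
  by rewrite sumrB rmorph_sum /e -big_mkcond big_pred1_eq rmorph1 mulr1.
have HB : \sum_i phi (B i) *: g i = 0.
  have := inN0map _ HvB; under eq_bigr do rewrite scalerBl.
  by rewrite sumrB Hv sub0r => /eqP; rewrite oppr_eq0 => /eqP.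
have [d Hd] := Hrelker B HB.
have HphiB : inN (fun i => phi (B i)).
  exists (fun t => match t with inl j => phi (d j) | inr _ => 0 end) => i.
  rewrite Hd rmorph_sum big_sumType /= [X in _ + X]big1 ?addr0 => [|t _]; last by rewrite mul0r.
  by apply: eq_bigr => j _; rewrite rmorphM.
have [c Hc] : inN v.
  by apply: inN_ext (inN_add _ _ HvB HphiB) => i; rewrite subrK.
exists (fun j => c (enum_val j)) => i.
by rewrite Hc -(big_enum_val (fun t => c t * relS t i)).
Qed.
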